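(* Let $x\cdot y$ be a PA-structure on $(\mathfrak{g},\mathfrak{n})$, where $\mathfrak{g}$ and $\mathfrak{n}$ are $2$-step nilpotent. Then $x\circ y=\frac12(x\cdot y+y\cdot x)$ defines a CPA-structure on $\mathfrak{n}$ if and only if, for all $x,y\in V$, $$[\mathrm{ad}(x),\mathrm{Ad}(y)]=\mathrm{Ad}([x,y])$$ and $$L(\{x,y\})-L([x,y])=\tfrac12\bigl(\mathrm{ad}(\{x,y\})+[\mathrm{ad}(y),L(x)]+[L(y),\mathrm{ad}(x)]\bigr).$$
   Context: Let $K$ be a field of characteristic zero and $V$ a finite-dimensional vector space over $K$. Let $\mathfrak{g}=(V,[\,,])$ and $\mathfrak{n}=(V,\{\,,\})$ be two Lie algebra structures on $V$. A post-Lie algebra structure (PA-structure) on the pair $(\mathfrak{g},\mathfrak{n})$ is a $K$-bilinear product $x\cdot y$ on $V$ satisfying, for all $x,y,z\in V$: (i) $x\cdot y-y\cdot x=[x,y]-\{x,y\}$; (ii) $[x,y]\cdot z=x\cdot(y\cdot z)-y\cdot(x\cdot z)$; (iii) $x\cdot\{y,z\}=\{x\cdot y,z\}+\{y,x\cdot z\}$. Write $L(x)(y)=x\cdot y$, $\mathrm{ad}(x)(y)=[x,y]$, $\mathrm{Ad}(x)(y)=\{x,y\}$; brackets of operators are commutators in $\mathrm{End}(V)$. A commutative post-Lie algebra structure (CPA-structure) on the Lie algebra $\mathfrak{n}=(V,\{\,,\})$ is a bilinear product $x\circ y$ on $V$ with $x\circ y=y\circ x$, $\{x,y\}\circ z=x\circ(y\circ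 z)-y\circ(x\circ z)$, and $x\circ\{y,z\}=\{x\circ y,z\}+\{y,x\circ z\}$ for all $x,y,z$. A Lie algebra is called $2$-step nilpotent here if it is nilpotent of class at most $2$. *)

(* Defs.v *)
From HB Require Import structures.
From mathcomp Require Import all_boot all_order all_algebra.
Set Implicit Arguments.
Unset Strict Implicit.
Unset Printing Implicit Defensive.
Import GRing.Theory.
Local Open Scope ring_scope.

Definition bilinear_prod (K : fieldType) (V : vectType K) (m : V -> V -> V) :=
  (forall a x y z, m (a *: x + y) z = a *: m x z + m y z) /\
  (forall a x y z, m x (a *: y + z) = a *: m x y + m x z).

Definition is_lie (K : fieldType) (V : vectType K) (br : V -> V -> V) :=
  bilinear_prod br /\
  (forall x, br x x = 0) /\
  (forall x y z, br x (br y z) + br y (br z x) + br z (br x y) = 0).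

Definition two_step_nilpotent (K : fieldType) (V : vectType K) (br : V -> V -> V) :=
  forall x y z, br (br x y) z = 0.

(* PA-structure on the pair (g, n) = ((V,lb), (V,nb)). *)
Definition is_PA (K : fieldType) (V : vectType K)
  (lb nb : V -> V -> V) (p : V -> V -> V) :=
  bilinear_prod p /\
  (forall x y, p x y - p y x = lb x y - nb x y) /\
  (forall x y z, p (lb x y) z = p x (p y z) - p y (p x z)) /\
  (forall x y z, p x (nb y z) = nb (p x y) z + nb y (p x z)).

Definition is_CPA (K : fieldType) (V : vectType K)
  (nb : V -> V -> V) (c : V -> V -> V) :=
  bilinear_prod c /\
  (forall x y, c x y = c y x) /\
  (forall x y z, c (nb x y) z = c x (c y z) - c y (c x z)) /\
  (forall x y z, c x (nb y z) = nb (c x y) z + nb y (c x z)).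

Definition opcomm (K : fieldType) (V : vectType K) (f g : V -> V) : V -> V :=
  fun v => f (g v) - g (f v).

(* Main.v *)
Require Import Defs.
From HB Require Import structures.
From mathcomp Require Import all_boot all_order all_algebra.
From mathcomp Require Import ring.
Import GRing.Theory.
Import VectorInternalTheory.
Local Open Scope ring_scope.

Set Implicit Arguments.
Unset Strict Implicit.
Section Helpers.
Variables (K : fieldType) (V : vectType K).

Lemma coordP (u v : V) :
  (forall i, v2r u 0 i = v2r v 0 i) -> u = v.
Proof. by move=> H; apply: v2r_inj; apply/rowP => i; apply: H. Qed.

Local Notation f u i := (v2r u 0 i).
Lemma cD (u v : V) i : f (u + v) i = f u i + f v i.
Proof. by rewrite raddfD mxE. Qed.
Lemma cN (u : V) i : f (- u) i = - f u i.
Proof. by rewrite raddfN mxE. Qed.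
Lemma cZ a (u : V) i : f (a *: u) i = a * f u i.
Proof. by rewrite linearZ mxE. Qed.
Lemma c0 i : f (0 : V) i = 0.
Proof. by rewrite raddf0 mxE. Qed.

Variable m : V -> V -> V.
Hypothesis Bm : bilinear_prod m.

Lemma b01 z : m 0 z = 0.
Proof.
case: Bm => H1 _; have := H1 1 0 0 z; rewrite !scale1r addr0.
by move/(congr1 (fun t => t - m 0 z)) => /=; rewrite addrK subrr => /esym.
Qed.
Lemma b02 z : m z 0 = 0.
Proof.
case: Bm => _ H1; have := H1 1 z 0 0; rewrite !scale1r addr0.
by move/(congr1 (fun t => t - m z 0)) => /=; rewrite addrK subrr => /esym.
Qed.
Lemma bD1 x y z : m (x + y) z = m x z + m y z.
Proof. by case: Bm => H1 _; have := H1 1 x y z; rewrite !scale1r. Qed.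
Lemma bD2 x y z : m z (x + y) = m z x + m z y.
Proof. by case: Bm => _ H1; have := H1 1 z x y; rewrite !scale1r. Qed.
Lemma bZ1 a x z : m (a *: x) z = a *: m x z.
Proof. by case: Bm => H1 _; have := H1 a x 0 z; rewrite !addr0 b01 addr0. Qed.
Lemma bZ2 a x z : m z (a *: x) = a *: m z x.
Proof. by case: Bm => _ H1; have := H1 a z x 0; rewrite !addr0 b02 addr0. Qed.
Lemma bN1 x z : m (- x) z = - m x z.
Proof. by rewrite -scaleN1r bZ1 scaleN1r. Qed.
Lemma bN2 x z : m z (- x) = - m z x.
Proof. by rewrite -scaleN1r bZ2 scaleN1r. Qed.
Lemma bB1 x y z : m (x - y) z = m x z - m y z.
Proof. by rewrite bD1 bN1. Qed.
Lemma bB2 x y z : m z (x - y) = m z x - m z y.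
Proof. by rewrite bD2 bN2. Qed.

Lemma lie_anti : is_lie m -> forall x y, m y x = - m x y.
Proof.
case=> _ [H0 _] x y; have := H0 (x + y).
rewrite bD1 !bD2 !H0 add0r addr0 => /eqP; rewrite addr_eq0 => /eqP ->.
by rewrite opprK.
Qed.
End Helpers.

Ltac lin := apply: coordP => ?;
  rewrite ?(cD, cN, cZ, c0).

Definition cpa_of (K : fieldType) (V : vectType K) (p : V -> V -> V) x y :=
  2%:R^-1 *: (p x y + p y x).
Arguments cpa_of {K V}.

Section Main.
Variables (K : fieldType) (V : vectType K) (lb nb p : V -> V -> V).
Hypothesis h2 : (2%:R : K) != 0.
Hypothesis Llb : is_lie lb.
Hypothesis Lnb : is_lie nb.
Hypothesis Ng : two_step_nilpotent lb.
Hypothesis Nn : two_step_nilpotent nb.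
Hypothesis PA : is_PA lb nb p.

Let c := cpa_of p.
Let h : K := 2%:R^-1.

Definition E1 x y z := lb x (nb y z) - nb y (lb x z) - nb (lb x y) z.

Lemma Bp : bilinear_prod p. Proof. by case: PA. Qed.
Lemma Blb : bilinear_prod lb. Proof. by case: Llb. Qed.
Lemma Bnb : bilinear_prod nb. Proof. by case: Lnb. Qed.

Lemma P1' a b : p b a = p a b - lb a b + nb a b.
Proof.
case: PA => _ [H _].
by rewrite -addrA [- _ + _]addrC -opprB -H opprB addrC subrK.
Qed.

Lemma nn1 a b d : nb a (nb b d) = 0.
Proof. by rewrite (lie_anti Bnb Lnb) Nn oppr0. Qed.
Lemma gg1 a b d : lb a (lb b d) = 0.
Proof. by rewrite (lie_anti Blb Llb) Ng oppr0. Qed.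

Lemma CBid x y z :
  c x (nb y z) - (nb (c x y) z + nb y (c x z)) = - h *: E1 x y z.
Proof.
rewrite /c /cpa_of /E1 (P1' x y) (P1' x (nb y z)) (P1' x z).
case: PA => _ [_ [_ P3]]; rewrite P3.
rewrite !(bD1 Bnb, bD2 Bnb, bB1 Bnb, bB2 Bnb, bZ1 Bnb, bZ2 Bnb, bN1 Bnb, bN2 Bnb, b01 Bnb, b02 Bnb) ?nn1 ?Nn.
lin. rewrite /h; field; exact: h2.
Qed.
Definition E2 x y z := p (nb x y) z - p (lb x y) z -
  h *: (lb (nb x y) z + (lb y (p x z) - p x (lb y z))
        + (p y (lb x z) - lb x (p y z))).

Lemma cE a b : c a b = p a b + h *: (nb a b - lb a b).
Proof. rewrite /c /cpa_of (P1' a b); lin; rewrite /h; field; exact: h2. Qed.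

Ltac bil := rewrite ?(bD1 Bnb, bD2 Bnb, bB1 Bnb, bB2 Bnb, bZ1 Bnb, bZ2 Bnb, bN1 Bnb, bN2 Bnb, b01 Bnb, b02 Bnb,
  bD1 Blb, bD2 Blb, bB1 Blb, bB2 Blb, bZ1 Blb, bZ2 Blb, bN1 Blb, bN2 Blb, b01 Blb, b02 Blb,
  bD1 Bp, bD2 Bp, bB1 Bp, bB2 Bp, bZ1 Bp, bZ2 Bp, bN1 Bp, bN2 Bp, b01 Bp, b02 Bp).

Lemma CAid x y z :
  c (nb x y) z - (c x (c y z) - c y (c x z)) =
  E2 x y z + h *: (h *: (E1 x y z - E1 y x z)).
Proof.
rewrite /E2 /E1 !cE.
case: PA => _ [_ [P2 P3]].
bil. rewrite P2 !P3 (P1' x y) (lie_anti Blb Llb x y).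
bil. rewrite ?nn1 ?Nn ?gg1 ?Ng.
bil.
lin. rewrite /h; field; exact: h2.
Qed.
Lemma E1P x y z : E1 x y z = 0 <-> opcomm (lb x) (nb y) z = nb (lb x y) z.
Proof. rewrite /E1 /opcomm; split; [by move/eqP; rewrite subr_eq0 => /eqP | by move=> ->; rewrite subrr]. Qed.

Lemma E2P x y z : E2 x y z = 0 <->
  p (nb x y) z - p (lb x y) z =
      2%:R^-1 *: (lb (nb x y) z + opcomm (lb y) (p x) z
                                 + opcomm (p y) (lb x) z).
Proof. rewrite /E2 /opcomm; split; [by move/eqP; rewrite subr_eq0 => /eqP | by move=> ->; rewrite subrr]. Qed.

Lemma hsc (v : V) : h *: v = 0 -> v = 0.
Proof.
move/eqP; rewrite scaler_eq0 => /orP [|/eqP //].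
by rewrite /h invr_eq0 (negbTE h2).
Qed.

Lemma main_sec : is_CPA nb (cpa_of p) <->
   (forall x y z, opcomm (lb x) (nb y) z = nb (lb x y) z) /\
   (forall x y z,
      p (nb x y) z - p (lb x y) z =
      2%:R^-1 *: (lb (nb x y) z + opcomm (lb y) (p x) z
                                 + opcomm (p y) (lb x) z)).
Proof.
have B1 : forall x y z, nb (c x y) z + nb y (c x z) = c x (nb y z) <-> E1 x y z = 0.
  move=> x y z; split.
    move=> H; apply: hsc; apply: oppr_inj; rewrite oppr0 -scaleNr -CBid H subrr //.
  move=> H; apply/eqP; rewrite eq_sym -subr_eq0 CBid H scaler0 //.
have E1z : (forall x y z, nb (c x y) z + nb y (c x z) = c x (nb y z)) ->
           forall x y z, E1 x y z = 0 by move=> H x y z; apply/B1.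
split.
- case=> _ [_ [A B]].
  have e1 : forall x y z, E1 x y z = 0 by apply: E1z => x y z; exact: (esym (B x y z)).
  split=> x y z; first by apply/E1P.
  apply/E2P; have := CAid x y z; rewrite /c A subrr !e1 subrr !scaler0 addr0.
  by move/esym.
- case=> H1 H2.
  have e1 : forall x y z, E1 x y z = 0 by move=> x y z; apply/E1P.
  have e2 : forall x y z, E2 x y z = 0 by move=> x y z; apply/E2P.
  have bl : bilinear_prod (cpa_of p).
    by split=> a x y w; rewrite /cpa_of; bil; lin; ring.
  split; first exact: bl.
  split; first by move=> x y; rewrite /cpa_of addrC.
  split.
    move=> x y z; apply/eqP; rewrite -subr_eq0.
    by rewrite -/c CAid e2 !e1 subrr !scaler0 addr0.
  by move=> x y z; apply/esym; apply/B1.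
Qed.
End Main.

Theorem proposition4p6 (K : fieldType) (V : vectType K)
  (lb nb p : V -> V -> V) :
  [pchar K] =i pred0 ->
  is_lie lb -> is_lie nb ->
  two_step_nilpotent lb -> two_step_nilpotent nb ->
  is_PA lb nb p ->
  (is_CPA nb (fun x y => 2%:R^-1 *: (p x y + p y x)) <->
   (forall x y z, opcomm (lb x) (nb y) z = nb (lb x y) z) /\
   (forall x y z,
      p (nb x y) z - p (lb x y) z =
      2%:R^-1 *: (lb (nb x y) z + opcomm (lb y) (p x) z
                                 + opcomm (p y) (lb x) z))).
Proof.
move=> ch Llb Lnb Ng Nn PA.
have h2 : (2%:R : K) != 0 by move/pcharf0P: ch => ->.
exact: (main_sec h2 Llb Lnb Ng Nn PA).
Qed.
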